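(* Let $(A,\succ,\prec)$ be a Leibniz-dendriform algebra and $r\in A\otimes A$ such that $S(r)=0$ and $r+\tau(r)$ is invariant (so $(A,\succ,\prec,\Delta_{\succ,r},\Delta_{\prec,r})$ is quasi-triangular). Then $\tau(r)$ also satisfies $S(\tau(r))=0$ and $\tau(r)+\tau(\tau(r))$ is invariant, so $(A,\succ,\prec,\Delta_{\succ,\tau(r)},\Delta_{\prec,\tau(r)})$ is quasi-triangular. If moreover $T_{r+\tau(r)}$ is a linear isomorphism (factorizable case), then so is $T_{\tau(r)+r}$, so the latter bialgebra is factorizable as well.
   Context: $\langle\cdot,\cdot\rangle$ is the natural pairing, $I$ the identity, $\tau(a\otimes b)=b\otimes a$. A Leibniz-dendriform algebra is a vector space $A$ with bilinear operations $\succ,\prec$ such that, with $x\circ y:=x\succ y+x\prec y$, for all $x,y,z$: $(x\circ y)\succ z=x\succ(y\succ z)-y\succ(x\succ z)$, $y\prec(x\circ z)+(x\succ y)\prec z=x\succ(y\prec z)$, $x\prec(y\circ z)=(x\prec y)\prec z+y\succ(x\prec z)$. Write $x\odot y:=x\succ y+y\prec x$, $x\star y:=x\circ y+y\circ x$; $L_*(x)y=x*y$, $R_*(x)y=y*x$; $L_\odot:=L_\succ+R_\prec$, $L_\star:=L_\circ+R_\circ$. For $r=\sum_ia_i\otimes b_i$: $T_r:A^*\to A$, $\langle T_r(\zeta),\eta\rangle=\langle r,\zeta\otimes\eta\rangle$; $S(r):=\sum_{i,j}\big(a_i\otimes a_j\otimes (b_j\circ b_i)-a_i\otimes (b_i\odot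 a_j)\otimes b_j-(a_i\succ a_j)\otimes b_i\otimes b_j\big)$. $s\in A\otimes A$ is invariant if for all $x$: $(L_\odot(x)\otimes I-I\otimes R_\circ(x))s=0$ and $(L_\star(x)\otimes I-I\otimes R_\prec(x))\tau(s)=0$. Coboundary maps: $\Delta_{\succ,r}(x)=(L_\odot(x)\otimes I-I\otimes R_\circ(x))r$, $\Delta_{\prec,r}(x)=(L_\star(x)\otimes I-I\otimes R_\prec(x))\tau(r)$. The bialgebra $(A,\succ,\prec,\Delta_{\succ,r},\Delta_{\prec,r})$ is called quasi-triangular if $S(r)=0$ and $r+\tau(r)$ is invariant, and factorizable if in addition $T_{r+\tau(r)}:A^*\to A$ is a linear isomorphism. *)

(* Defs.v *)
(* A finite-dimensional K-vector space A is modelled as 'rV[K]_n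
   (coordinates in the standard basis e_i = delta_mx 0 i). *)
From HB Require Import structures.
From mathcomp Require Import all_boot all_order all_algebra.
Set Implicit Arguments. Unset Strict Implicit. Unset Printing Implicit Defensive.
Import GRing.Theory.
Local Open Scope ring_scope.

Section LeibDend.
Variables (K : fieldType) (n : nat).

Definition vec := 'rV[K]_n.
(* A ⊗ A : coefficient matrix, entry (i,j) = coefficient of e_i ⊗ e_j *)
Definition tensor2 := 'M[K]_n.
(* A ⊗ A ⊗ A : coefficient function on triples of indices *)
Definition tensor3 := {ffun 'I_n * 'I_n * 'I_n -> K}.

Definition ebasis (i : 'I_n) : vec := delta_mx 0 i.

Definition is_bilinear (f : vec -> vec -> vec) : Prop :=
  (forall x, linear (f x)) /\ (forall y, linear (fun x => f x y)).

Variables (sp pr : vec -> vec -> vec). (* sp = ≻ , pr = ≺ *)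

Definition circ x y := sp x y + pr x y.
Definition odot x y := sp x y + pr y x.
Definition star x y := circ x y + circ y x.

Definition leibniz_dendriform : Prop :=
  (forall x y z, sp (circ x y) z = sp x (sp y z) - sp y (sp x z)) /\
  (forall x y z, pr y (circ x z) + pr (sp x y) z = sp x (pr y z)) /\
  (forall x y z, pr x (circ y z) = pr (pr x y) z + sp y (pr x z)).

Definition pure2 (x y : vec) : tensor2 := x^T *m y.
Definition pure3 (x y z : vec) : tensor3 :=
  [ffun ijk => x 0 ijk.1.1 * y 0 ijk.1.2 * z 0 ijk.2].

Definition scale3 (c : K) (f : tensor3) : tensor3 := [ffun k => c * f k].

Definition tau (r : tensor2) : tensor2 := r^T.

Definition tmap2 (f g : vec -> vec) (r : tensor2) : tensor2 :=
  \sum_(i < n) \sum_(j < n) r i j *: pure2 (f (ebasis i)) (g (ebasis j)).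

Definition L_odot x := fun y => odot x y.
Definition R_circ x := fun y => circ y x.
Definition L_star x := fun y => star x y.
Definition R_prec x := fun y => pr y x.

Definition invariant (s : tensor2) : Prop :=
  forall x : vec,
    tmap2 (L_odot x) id s - tmap2 id (R_circ x) s = 0 /\
    tmap2 (L_star x) id (tau s) - tmap2 id (R_prec x) (tau s) = 0.

Definition Sr (r : tensor2) : tensor3 :=
  \sum_(p < n) \sum_(q < n) \sum_(s < n) \sum_(t < n)
    scale3 (r p q * r s t)
      (pure3 (ebasis p) (ebasis s) (circ (ebasis t) (ebasis q))
       - pure3 (ebasis p) (odot (ebasis q) (ebasis s)) (ebasis t)
       - pure3 (sp (ebasis p) (ebasis s)) (ebasis q) (ebasis t)).

(* T_r : A^* -> A, A^* identified with 'rV_n via the dual basis;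
   <T_r zeta, eta> = <r, zeta ⊗ eta> = zeta *m r *m eta^T *)
Definition Tr (r : tensor2) (zeta : vec) : vec := zeta *m r.

Definition quasi_triangular (r : tensor2) : Prop :=
  Sr r = 0 /\ invariant (r + tau r).

Definition factorizable (r : tensor2) : Prop :=
  quasi_triangular r /\ bijective (Tr (r + tau r)).

End LeibDend.

(* Main.v *)
Require Import Defs.
From HB Require Import structures.
From mathcomp Require Import all_boot all_order all_algebra.
From mathcomp Require Import ring.
Set Implicit Arguments. Unset Strict Implicit. Unset Printing Implicit Defensive.
Import GRing.Theory.
Local Open Scope ring_scope.

Section Proof.
Variables (K : fieldType) (n : nat).
Variables (sp pr : vec K n -> vec K n -> vec K n).
Local Notation e := (@ebasis K n).

Definition mx (f : vec K n -> vec K n) : 'M[K]_n := \matrix_(i, j) f (e i) 0 j.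

Lemma pure2E (x y : vec K n) a b : pure2 x y a b = x 0 a * y 0 b.
Proof. by rewrite /pure2 !mxE big_ord1 !mxE. Qed.

Lemma tmap2_entry f g (t : 'M[K]_n) a b :
  tmap2 f g t a b = \sum_i \sum_j t i j * (f (e i) 0 a * g (e j) 0 b).
Proof.
rewrite /tmap2 summxE; apply: eq_bigr => i _; rewrite summxE.
by apply: eq_bigr => j _; rewrite mxE pure2E.
Qed.

Lemma tmap2E f g t : tmap2 f g t = (mx f)^T *m t *m mx g.
Proof.
apply/matrixP => a b; rewrite tmap2_entry !mxE.
under [RHS]eq_bigr => j _ do rewrite !mxE big_distrl /=.
rewrite exchange_big /=; apply: eq_bigr => i _; apply: eq_bigr => j _.
by rewrite !mxE; ring.
Qed.

Lemma mx_id : mx id = 1%:M.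
Proof. apply/matrixP => i j; by rewrite !mxE eq_sym. Qed.

Lemma grp_id (A1 A2 A3 A4 A7 A8 : 'M[K]_n) :
  A1 + (A7 + A8) = (A1 + A2 - (A3+A4)) + (A7 + A8 + A3 + A4 - A2).
Proof. apply/matrixP => a b; rewrite !mxE; ring. Qed.
Lemma grp_id2 (A2 A4 A7 A8 A9 A10 : 'M[K]_n) :
  A10 + A8 + A9 = (A7 + A8 + A10 + A4 - A2) - (A7 + A4 - (A9 + A2)).
Proof. apply/matrixP => a b; rewrite !mxE; ring. Qed.

Lemma trD (A B : 'M[K]_n) : (A + B)^T = A^T + B^T.
Proof. by apply/matrixP => i j; rewrite !mxE. Qed.
Lemma trB (A B : 'M[K]_n) : (A - B)^T = A^T - B^T.
Proof. by apply/matrixP => i j; rewrite !mxE. Qed.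
Lemma tr0 : (0 : 'M[K]_n)^T = 0.
Proof. by apply/matrixP => i j; rewrite !mxE. Qed.

Lemma J_all (s : 'M[K]_n) (hs : s^T = s) (x : vec K n)
  (H : Defs.invariant sp pr s) :
  [/\ tmap2 id (R_circ sp pr x) s - tmap2 (L_odot sp pr x) id s = 0,
      tmap2 id (fun y => odot sp pr y x) s + tmap2 (fun y => sp y x) id s = 0 &
      tmap2 (sp x) id s + tmap2 id (circ sp pr x) s = 0].
Proof.
have [H1 H2] := H x.
rewrite /tau hs !tmap2E mx_id in H1 H2 *.
set P := mx (sp x); set Q := mx (fun y => sp y x).
set U := mx (pr x); set V := mx (fun y => pr y x).
have eLo : mx (L_odot sp pr x) = P + V by apply/matrixP => i j; rewrite !mxE.
have eRc : mx (R_circ sp pr x) = Q + V by apply/matrixP => i j; rewrite !mxE.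
have eLs : mx (L_star sp pr x) = P + U + Q + V.
  by apply/matrixP => i j; rewrite !mxE /L_star /star /circ !addrA.
have eRp : mx (R_prec pr x) = V by apply/matrixP => i j; rewrite !mxE.
have eRo : mx (fun y => odot sp pr y x) = Q + U by apply/matrixP => i j; rewrite !mxE.
have eLc : mx (circ sp pr x) = P + U by apply/matrixP => i j; rewrite !mxE.
rewrite eLo eRc in H1 *; rewrite eLs eRp in H2; rewrite eRo eLc.
rewrite trmx1 !mul1mx !mulmx1 in H1 H2 *.
rewrite !trD !mulmxDl !mulmxDr in H1 H2 *.
have e1 : P^T *m s + V^T *m s - (s *m Q + s *m V) = 0 by [].
have e2 : P^T *m s + U^T *m s + Q^T *m s + V^T *m s - s *m V = 0 by [].
have tr : forall X : 'M[K]_n, (X^T *m s)^T = s *m X.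
  by move=> X; rewrite trmx_mul trmxK hs.
have tr' : forall X : 'M[K]_n, (s *m X)^T = X^T *m s.
  by move=> X; rewrite trmx_mul hs.
have e2t : s *m P + s *m U + s *m Q + s *m V - V^T *m s = 0.
  by have := congr1 trmx e2; rewrite !trB !trD !tr tr' tr0.
have e1t : s *m P + s *m V - (Q^T *m s + V^T *m s) = 0.
  by have := congr1 trmx e1; rewrite !trB !trD !tr !tr' tr0.
split.
- by apply/eqP; rewrite -oppr_eq0 opprB; apply/eqP.
- by rewrite (grp_id2 (V^T *m s) (s *m V) (s *m P)) e2t e1t subr0.
- by rewrite (grp_id _ (V^T *m s) (s *m Q) (s *m V)) e1 e2t addr0.
Qed.

Definition F3 p q s u : tensor3 K n :=
  pure3 (e p) (e s) (circ sp pr (e u) (e q))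
  - pure3 (e p) (odot sp pr (e q) (e s)) (e u)
  - pure3 (sp (e p) (e s)) (e q) (e u).

Definition B (t t' : 'M[K]_n) : tensor3 K n :=
  \sum_(p < n) \sum_(q < n) \sum_(s < n) \sum_(u < n) scale3 (t p q * t' s u) (F3 p q s u).

Lemma SrB t : Sr sp pr t = B t t.
Proof. by []. Qed.

Lemma entry_sum4 (f : 'I_n -> 'I_n -> 'I_n -> 'I_n -> tensor3 K n) x :
  (\sum_(p < n) \sum_(q < n) \sum_(s < n) \sum_(u < n) f p q s u) x =
  \sum_(p < n) \sum_(q < n) \sum_(s < n) \sum_(u < n) f p q s u x.
Proof.
rewrite sum_ffunE; apply: eq_bigr => p _; rewrite sum_ffunE; apply: eq_bigr => q _.
rewrite sum_ffunE; apply: eq_bigr => s _; by rewrite sum_ffunE.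
Qed.

Lemma sum4D (f g : 'I_n -> 'I_n -> 'I_n -> 'I_n -> K) :
  \sum_(p < n) \sum_(q < n) \sum_(s < n) \sum_(u < n) (f p q s u + g p q s u) =
  \sum_(p < n) \sum_(q < n) \sum_(s < n) \sum_(u < n) f p q s u +
  \sum_(p < n) \sum_(q < n) \sum_(s < n) \sum_(u < n) g p q s u.
Proof.
rewrite -big_split; apply: eq_bigr => p _; rewrite -big_split; apply: eq_bigr => q _.
rewrite -big_split; apply: eq_bigr => s _; by rewrite -big_split.
Qed.

Lemma sum4_swap (f : 'I_n -> 'I_n -> 'I_n -> 'I_n -> K) :
  \sum_(p < n) \sum_(q < n) \sum_(s < n) \sum_(u < n) f p q s u =
  \sum_(s < n) \sum_(u < n) \sum_(p < n) \sum_(q < n) f p q s u.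
Proof.
under eq_bigr => p _ do rewrite exchange_big /=.
under eq_bigr => p _ do under eq_bigr => s _ do rewrite exchange_big /=.
rewrite exchange_big /=; apply: eq_bigr => s _; by rewrite exchange_big.
Qed.

Lemma sum4_zero (a : 'I_n -> 'I_n -> K) (b : 'I_n -> 'I_n -> 'I_n -> 'I_n -> K) :
  (forall p q, \sum_(s < n) \sum_(u < n) b p q s u = 0) ->
  \sum_(p < n) \sum_(q < n) \sum_(s < n) \sum_(u < n) a p q * b p q s u = 0.
Proof.
move=> H; apply: big1 => p _; apply: big1 => q _.
under eq_bigr => s _ do rewrite -mulr_sumr.
by rewrite -mulr_sumr H mulr0.
Qed.

Lemma pure3E (a b c : vec K n) i j k : pure3 a b c (i, j, k) = a 0 i * b 0 j * c 0 k.
Proof. by rewrite ffunE. Qed.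

Lemma eB (A B : 'M[K]_n) i j : (A - B) i j = A i j - B i j.
Proof. by rewrite !mxE. Qed.
Lemma eD (A B : 'M[K]_n) i j : (A + B) i j = A i j + B i j.
Proof. by rewrite !mxE. Qed.

Lemma tmap2_sum2 f g f' g' (t : 'M[K]_n) a b c :
  tmap2 f g t a b + c * tmap2 f' g' t a b =
  \sum_i \sum_j t i j * (f (e i) 0 a * g (e j) 0 b + c * (f' (e i) 0 a * g' (e j) 0 b)).
Proof.
rewrite !tmap2_entry mulr_sumr -big_split; apply: eq_bigr => i _.
rewrite mulr_sumr -big_split; apply: eq_bigr => j _ /=; ring.
Qed.


Lemma tmap2_sub f g f' g' (t : 'M[K]_n) a b :
  tmap2 f g t a b - tmap2 f' g' t a b =
  \sum_i \sum_j t i j * (f (e i) 0 a * g (e j) 0 b - f' (e i) 0 a * g' (e j) 0 b).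
Proof.
rewrite !tmap2_entry -sumrB; apply: eq_bigr => i _.
rewrite -sumrB; apply: eq_bigr => j _; ring.
Qed.

Lemma tmap2_add f g f' g' (t : 'M[K]_n) a b :
  tmap2 f g t a b + tmap2 f' g' t a b =
  \sum_i \sum_j t i j * (f (e i) 0 a * g (e j) 0 b + f' (e i) 0 a * g' (e j) 0 b).
Proof.
rewrite !tmap2_entry -big_split; apply: eq_bigr => i _.
rewrite -big_split; apply: eq_bigr => j _ /=; ring.
Qed.

Lemma BE t t' i j k : B t t' (i, j, k) =
  \sum_(p < n) \sum_(q < n) \sum_(s < n) \sum_(u < n) (t p q * t' s u) *
   (e p 0 i * e s 0 j * circ sp pr (e u) (e q) 0 k
  - e p 0 i * odot sp pr (e q) (e s) 0 j * e u 0 k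
  - sp (e p) (e s) 0 i * e q 0 j * e u 0 k).
Proof.
rewrite entry_sum4; do 4! (apply: eq_bigr => ? _).
by rewrite !ffunE.
Qed.

Definition C (t t' : 'M[K]_n) : tensor3 K n :=
  \sum_(p < n) \sum_(q < n) \sum_(s < n) \sum_(u < n)
    scale3 (t p q * t' s u) (pure3 (sp (e p) (e s)) (e q) (e u)).

Lemma CE t t' i j k : C t t' (i, j, k) =
  \sum_(p < n) \sum_(q < n) \sum_(s < n) \sum_(u < n) (t p q * t' s u) *
   (sp (e p) (e s) 0 i * e q 0 j * e u 0 k).
Proof.
rewrite entry_sum4; do 4! (apply: eq_bigr => ? _).
by rewrite !ffunE.
Qed.

Lemma L1 t s :
  (forall q, tmap2 id (R_circ sp pr (e q)) s - tmap2 (L_odot sp pr (e q)) id s = 0) ->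
  B t s + C t s = 0.
Proof.
move=> J1; apply/ffunP => [[[i j] k]].
rewrite ffunE BE CE -sum4D ffunE.
transitivity (\sum_(p < n) \sum_(q < n) \sum_(s' < n) \sum_(u < n)
   (t p q * e p 0 i) * (s s' u * (e s' 0 j * circ sp pr (e u) (e q) 0 k
     - odot sp pr (e q) (e s') 0 j * e u 0 k))).
  by do 4! (apply: eq_bigr => ? _); ring.
apply: sum4_zero => p q.
move/matrixP: (J1 q) => /(_ j k); rewrite eB tmap2_sub mxE => H; apply: etrans H.
by do 2! (apply: eq_bigr => ? _).
Qed.


Lemma sum4B (f g : 'I_n -> 'I_n -> 'I_n -> 'I_n -> K) :
  \sum_(p < n) \sum_(q < n) \sum_(s < n) \sum_(u < n) (f p q s u - g p q s u) =
  \sum_(p < n) \sum_(q < n) \sum_(s < n) \sum_(u < n) f p q s u -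
  \sum_(p < n) \sum_(q < n) \sum_(s < n) \sum_(u < n) g p q s u.
Proof.
rewrite -sumrB; apply: eq_bigr => p _; rewrite -sumrB; apply: eq_bigr => q _.
rewrite -sumrB; apply: eq_bigr => s _; by rewrite -sumrB.
Qed.

Definition D (t t' : 'M[K]_n) : tensor3 K n :=
  \sum_(p < n) \sum_(q < n) \sum_(s < n) \sum_(u < n)
    scale3 (t p q * t' s u) (pure3 (e p) (e s) (circ sp pr (e u) (e q))).

Lemma DE t t' i j k : D t t' (i, j, k) =
  \sum_(p < n) \sum_(q < n) \sum_(s < n) \sum_(u < n) (t p q * t' s u) *
   (e p 0 i * e s 0 j * circ sp pr (e u) (e q) 0 k).
Proof.
rewrite entry_sum4; do 4! (apply: eq_bigr => ? _).
by rewrite !ffunE.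
Qed.

Lemma L2 s r :
  (forall x, tmap2 id (fun y => odot sp pr y (e x)) s + tmap2 (fun y => sp y (e x)) id s = 0) ->
  B s r = D s r.
Proof.
move=> J2; apply/ffunP => [[[i j] k]].
apply/eqP; rewrite -subr_eq0; apply/eqP.
rewrite BE DE -sum4B sum4_swap.
transitivity (\sum_(s' < n) \sum_(u < n) \sum_(p < n) \sum_(q < n)
   (- (r s' u * e u 0 k)) * (s p q * (e p 0 i * odot sp pr (e q) (e s') 0 j
     + sp (e p) (e s') 0 i * e q 0 j))).
  by do 4! (apply: eq_bigr => ? _); ring.
apply: sum4_zero => s' u.
move/matrixP: (J2 s') => /(_ i j); rewrite eD tmap2_add mxE => H; apply: etrans H.
by do 2! (apply: eq_bigr => ? _).
Qed.

Lemma L3 s r :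
  (forall x, tmap2 (sp (e x)) id s + tmap2 id (circ sp pr (e x)) s = 0) ->
  C (tau r) s + D s r = 0.
Proof.
move=> J3; apply/ffunP => [[[i j] k]].
rewrite !ffunE CE DE [X in _ + X]sum4_swap [X in X + _]exchange_big /= -sum4D.
transitivity (\sum_(a < n) \sum_(b < n) \sum_(c < n) \sum_(d < n)
   (r a b * e a 0 j) * (s c d * (sp (e b) (e c) 0 i * e d 0 k
     + e c 0 i * circ sp pr (e b) (e d) 0 k))).
  by do 4! (apply: eq_bigr => ? _); rewrite /tau mxE; ring.
apply: sum4_zero => a b.
move/matrixP: (J3 b) => /(_ i k); rewrite eD tmap2_add mxE => H; apply: etrans H.
by do 2! (apply: eq_bigr => ? _).
Qed.

Lemma Badd1 t1 t2 t' : B (t1 + t2) t' = B t1 t' + B t2 t'.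
Proof.
apply/ffunP => [[[i j] k]]; rewrite ffunE !BE -sum4D.
by do 4! (apply: eq_bigr => ? _); rewrite mxE; ring.
Qed.

Lemma Badd2 t t1 t2 : B t (t1 + t2) = B t t1 + B t t2.
Proof.
apply/ffunP => [[[i j] k]]; rewrite ffunE !BE -sum4D.
by do 4! (apply: eq_bigr => ? _); rewrite mxE; ring.
Qed.

End Proof.

Lemma fin_grp (G : zmodType) (btt bts btr bsr brr c d : G) :
  bts = btt + btr -> bsr = brr + btr -> bts + c = 0 -> bsr = d -> c + d = 0 ->
  btt = brr.
Proof.
move=> h1 h2 h3 h4 h5.
have e1 : btt = bts - btr by rewrite h1 addrK.
have e2 : btr = bsr - brr by rewrite h2 [brr + _]addrC addrK.
have e3 : bts = - c by apply/eqP; rewrite -addr_eq0 h3.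
have e4 : d = - c by apply/eqP; rewrite -addr_eq0 addrC h5.
by rewrite e1 e2 e3 h4 e4 opprB addrC addrNK.
Qed.

Lemma qt_tau (K : fieldType) (n : nat) (sp pr : vec K n -> vec K n -> vec K n)
  (r : tensor2 K n) :
  quasi_triangular sp pr r -> quasi_triangular sp pr (tau r).
Proof.
move=> [hS hI]; split; last by rewrite /tau trmxK addrC.
set s := r + tau r.
have hs : s^T = s by rewrite /s trD /tau trmxK addrC.
have J1 : forall q, tmap2 id (R_circ sp pr (@ebasis K n q)) s -
                    tmap2 (L_odot sp pr (@ebasis K n q)) id s = 0.
  by move=> q; have [] := J_all hs (@ebasis K n q) hI.
have J2 : forall x, tmap2 id (fun y => odot sp pr y (@ebasis K n x)) s +
                    tmap2 (fun y => sp y (@ebasis K n x)) id s = 0.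
  by move=> q; have [] := J_all hs (@ebasis K n q) hI.
have J3 : forall x, tmap2 (sp (@ebasis K n x)) id s +
                    tmap2 id (circ sp pr (@ebasis K n x)) s = 0.
  by move=> q; have [] := J_all hs (@ebasis K n q) hI.
rewrite SrB -hS SrB.
apply: (@fin_grp _ _ (B sp pr (tau r) s) (B sp pr (tau r) r) (B sp pr s r)
   (B sp pr r r) (C sp (tau r) s) (D sp pr s r)).
- by rewrite /s Badd2 addrC.
- by rewrite /s Badd1.
- exact: L1.
- exact: L2.
- exact: L3.
Qed.

Theorem mainTheorem9 (K : fieldType) (n : nat) (sp pr : vec K n -> vec K n -> vec K n)
  (hsp : is_bilinear sp) (hpr : is_bilinear pr)
  (hLD : leibniz_dendriform sp pr) (r : tensor2 K n) :
  (quasi_triangular sp pr r -> quasi_triangular sp pr (tau r)) /\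
  (factorizable sp pr r -> factorizable sp pr (tau r)).
Proof.
split; first exact: qt_tau.
move=> [hq hb]; split; first exact: qt_tau.
by rewrite /tau trmxK addrC.
Qed.
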